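(* Let $\bm{X}\in\mathbb{R}^{n_1\times r}$, $\bm{Y}\in\mathbb{R}^{n_2\times r}$, and let $\bm{X}_\star,\bm{Y}_\star$, $\bm{M}_\star=\bm{X}_\star\bm{Y}_\star^\top$ be as in the context. Suppose that $\bm{I}_r$ is a minimizer of $\|\bm{X}\bm{P}-\bm{X}_\star\|_{\mathrm{F}}^2+\|\bm{Y}\bm{P}^{-\top}-\bm{Y}_\star\|_{\mathrm{F}}^2$ over invertible $\bm{P}\in\mathbb{R}^{r\times r}$. Then \[ \big\langle\bm{X}-\bm{X}_\star,(\bm{X}\bm{Y}^\top-\bm{M}_\star)\bm{Y}\big\rangle\ge\|\bm{Y}(\bm{X}-\bm{X}_\star)^\top\|_{\mathrm{F}}^2-\frac14\|\bm{X}-\bm{X}_\star\|_{\mathrm{F}}^4, \] and \[ \big\langle\bm{Y}-\bm{Y}_\star,(\bm{X}\bm{Y}^\top-\bm{M}_\star)^\top\bm{X}\big\rangle\ge\|\bm{X}(\bm{Y}-\bm{Y}_\star)^\top\|_{\mathrm{F}}^2-\frac14\|\bm{Y}-\bm{Y}_\star\|_{\mathrm{F}}^4. \]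
   Context: $\bm{M}_\star\in\mathbb{R}^{n_1\times n_2}$ has rank $r$ and compact SVD $\bm{M}_\star=\bm{U}_\star\bm{\Sigma}_\star\bm{V}_\star^\top$; $\bm{X}_\star=\bm{U}_\star\bm{\Sigma}_\star^{1/2}$, $\bm{Y}_\star=\bm{V}_\star\bm{\Sigma}_\star^{1/2}$, so $\bm{M}_\star=\bm{X}_\star\bm{Y}_\star^\top$. $\langle\bm{A},\bm{B}\rangle=\mathrm{Tr}(\bm{B}^\top\bm{A})$ and $\bm{P}^{-\top}=(\bm{P}^{-1})^\top$. *)

(* Defs.v *)
From mathcomp Require Import all_boot all_order all_algebra.
Set Implicit Arguments. Unset Strict Implicit. Unset Printing Implicit Defensive.
Import Order.TTheory GRing.Theory Num.Theory.
Local Open Scope ring_scope.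

Definition frob_inner {R : comNzRingType} {m n : nat} (A B : 'M[R]_(m, n)) : R :=
  \tr (B^T *m A).

Definition frob2 {R : comNzRingType} {m n : nat} (A : 'M[R]_(m, n)) : R :=
  frob_inner A A.

(* Compact SVD data: M = U diag(s) V^T with U, V having orthonormal columns,
   s positive and nonincreasing; Xs = U Sigma^{1/2}, Ys = V Sigma^{1/2}. *)
Definition sqrt_diag {R : rcfType} {r : nat} (s : 'rV[R]_r) : 'M[R]_r :=
  diag_mx (\row_i Num.sqrt (s 0 i)).

Definition compact_svd {R : rcfType} {n1 n2 r : nat} (M : 'M[R]_(n1, n2))
  (U : 'M[R]_(n1, r)) (s : 'rV[R]_r) (V : 'M[R]_(n2, r)) : Prop :=
  [/\ U^T *m U = 1%:M, V^T *m V = 1%:M,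
      (forall i, 0 < s 0 i),
      (forall i j : 'I_r, (i <= j)%N -> s 0 j <= s 0 i)
    & M = U *m diag_mx s *m V^T].

Definition align_obj {R : rcfType} {n1 n2 r : nat}
  (X Xs : 'M[R]_(n1, r)) (Y Ys : 'M[R]_(n2, r)) (P : 'M[R]_r) : R :=
  frob2 (X *m P - Xs) + frob2 (Y *m (invmx P)^T - Ys).

(* Main.v *)
Require Import Defs.
From mathcomp Require Import all_boot all_order all_algebra.
From mathcomp Require Import ring lra.
Import Order.TTheory GRing.Theory Num.Theory.
Local Open Scope ring_scope.

Section Frob.
Variable R : rcfType.

Lemma frob_innerC {m n} (A B : 'M[R]_(m, n)) : frob_inner A B = frob_inner B A.
Proof. by rewrite /frob_inner -mxtrace_tr trmx_mul trmxK. Qed.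

Lemma frob_innerDl {m n} (A B C : 'M[R]_(m, n)) :
  frob_inner (A + B) C = frob_inner A C + frob_inner B C.
Proof. by rewrite /frob_inner mulmxDr mxtraceD. Qed.

Lemma frob_innerZl {m n} (a : R) (A C : 'M[R]_(m, n)) :
  frob_inner (a *: A) C = a * frob_inner A C.
Proof. by rewrite /frob_inner -scalemxAr mxtraceZ. Qed.

Lemma frob_innerNl {m n} (A C : 'M[R]_(m, n)) :
  frob_inner (- A) C = - frob_inner A C.
Proof. by rewrite -scaleN1r frob_innerZl mulN1r. Qed.

Lemma frob_innerDr {m n} (A B C : 'M[R]_(m, n)) :
  frob_inner C (A + B) = frob_inner C A + frob_inner C B.
Proof. by rewrite frob_innerC frob_innerDl !(frob_innerC C). Qed.

Lemma frob_innerZr {m n} (a : R) (A C : 'M[R]_(m, n)) :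
  frob_inner C (a *: A) = a * frob_inner C A.
Proof. by rewrite frob_innerC frob_innerZl frob_innerC. Qed.

Lemma frob_innerNr {m n} (A C : 'M[R]_(m, n)) :
  frob_inner C (- A) = - frob_inner C A.
Proof. by rewrite frob_innerC frob_innerNl frob_innerC. Qed.

Lemma frob_innerE {m n} (A B : 'M[R]_(m, n)) :
  frob_inner A B = \sum_i \sum_j A i j * B i j.
Proof.
rewrite /frob_inner /mxtrace exchange_big /=; apply: eq_bigr => j _.
rewrite mxE; apply: eq_bigr => i _; by rewrite mxE mulrC.
Qed.

Lemma frob2_ge0 {m n} (A : 'M[R]_(m, n)) : 0 <= frob2 A.
Proof.
have mul_self_ge0 (x : R) : 0 <= x * x by rewrite -expr2 sqr_ge0.
rewrite /frob2 frob_innerE; apply: sumr_ge0 => i _; apply: sumr_ge0 => j _.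
exact: mul_self_ge0.
Qed.

Lemma frob2_eq0 {m n} (A : 'M[R]_(m, n)) : frob2 A = 0 -> A = 0.
Proof.
have mul_self_ge0 (x : R) : 0 <= x * x by rewrite -expr2 sqr_ge0.
rewrite /frob2 frob_innerE => H; apply/matrixP => i j; rewrite mxE.
have H2 : \sum_j A i j * A i j = 0.
  apply: (psumr_eq0P _ H) => // k _; apply: sumr_ge0 => l _; exact: mul_self_ge0.
have H3 : A i j * A i j = 0.
  by apply: (psumr_eq0P _ H2) => // k _; exact: mul_self_ge0.
by apply/eqP; rewrite -[_ == 0]orbb -mulf_eq0 H3.
Qed.


Lemma frob_CS {m n} (A B : 'M[R]_(m, n)) :
  frob_inner A B ^+ 2 <= frob2 A * frob2 B.
Proof.
have [b0|bn0] := eqVneq (frob2 B) 0.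
  have -> : B = 0 by exact: frob2_eq0.
  rewrite -(scale0r (0 : 'M[R]_(m, n))) frob_innerZr mul0r expr0n /=.
  by rewrite mulr_ge0 ?frob2_ge0.
have bp : 0 < frob2 B by rewrite lt_def bn0 frob2_ge0.
have := frob2_ge0 (frob2 B *: A - frob_inner A B *: B).
rewrite /frob2 frob_innerDl !frob_innerDr !frob_innerNl !frob_innerNr
  !frob_innerZl !frob_innerZr (frob_innerC B A).
rewrite /frob2 in bp *.
move: bp; set a := frob_inner A A; set b := frob_inner B B; set c := frob_inner A B.
move=> bp H.
have : 0 <= b * (a * b - c ^+ 2) by move: H; congr (0 <= _); ring.
by rewrite pmulr_rge0 // subr_ge0.
Qed.

Lemma frob2_col {m n} (A : 'M[R]_(m, n)) : frob2 A = \sum_i frob2 (col i A).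
Proof.
rewrite /frob2 frob_innerE exchange_big /=; apply: eq_bigr => j _.
rewrite frob_innerE; apply: eq_bigr => i _.
by rewrite big_ord1 !mxE.
Qed.

Lemma frob2_gram {m n} (A : 'M[R]_(m, n)) : frob2 (A^T *m A) <= frob2 A ^+ 2.
Proof.
rewrite [frob2 A]frob2_col /frob2 frob_innerE expr2 mulr_suml.
apply: ler_sum => i _; rewrite mulr_sumr; apply: ler_sum => j _.
have -> : (A^T *m A) i j = frob_inner (col j A) (col i A).
  rewrite /frob_inner /mxtrace big_ord1 !mxE; apply: eq_bigr => k _.
  by rewrite !mxE.
by rewrite -expr2 mulrC; apply: frob_CS.
Qed.


Lemma frob_inner_mul3 {n1 n2 r} (Dx P : 'M[R]_(n1, r)) (Q Y : 'M[R]_(n2, r)) :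
  frob_inner Dx (P *m Q^T *m Y) = \tr ((Y^T *m Q) *m (P^T *m Dx)).
Proof. by rewrite /frob_inner !trmx_mul trmxK !mulmxA. Qed.

Lemma main_ineq' {n1 n2 r} (X Dx : 'M[R]_(n1, r)) (Y Dy : 'M[R]_(n2, r)) :
  X^T *m Dx = Dy^T *m Y ->
  frob2 (Y *m Dx^T) - frob2 Dx ^+ 2 / 4 <=
  frob_inner Dx ((X *m Y^T - (X - Dx) *m (Y - Dy)^T) *m Y).
Proof.
move=> HK.
rewrite linearB /= mulmxBl !mulmxBr !mulmxBl !(frob_innerDr, frob_innerNr).
rewrite !frob_inner_mul3.
set K := X^T *m Dx.
set D := Dx^T *m Dx.
have e1 : \tr (Y^T *m Y *m D) = frob2 (Y *m Dx^T).
  by rewrite /frob2 /frob_inner trmx_mul trmxK mulmxA mxtrace_mulC !mulmxA.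
have e2 : \tr (Y^T *m Dy *m K) = frob2 K.
  by rewrite /frob2 /frob_inner /K {2}HK trmx_mul trmxK.
have e3 : \tr (Y^T *m Dy *m D) = frob_inner D K.
  by rewrite /frob_inner /K HK trmx_mul trmxK.
rewrite e1 e2 e3.
have hD : frob2 D <= frob2 Dx ^+ 2 by exact: frob2_gram.
have h0 := frob2_ge0 (K - 2^-1 *: D).
rewrite /frob2 frob_innerDl !frob_innerDr !frob_innerNl !frob_innerNr
  !frob_innerZl !frob_innerZr (frob_innerC K D) in h0.
rewrite /frob2 in hD *.
move: h0 hD.
set a := frob_inner (Y *m Dx^T) (Y *m Dx^T).
set k := frob_inner K K. set dk := frob_inner D K. set dd := frob_inner D D.
set f := frob_inner Dx Dx.
set t1 := \tr (Y^T *m Y *m (X^T *m Dx)).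
move=> h0 hD.
lra.
Qed.


Lemma eps_zero (x K : R) : 0 <= K ->
  (forall t : R, t != 0 -> `|t| < 2^-1 -> 0 <= t * x + t ^+ 2 * K) -> x = 0.
Proof.
move=> K0 H; apply/eqP; apply/negPn/negP => xn0.
set d := 2 * (K + `|x| + 1).
have dp : 0 < d by rewrite /d; have := normr_ge0 x; lra.
have dn0 : d != 0 by rewrite gt_eqF.
have := H (- x / d).
rewrite mulf_eq0 oppr_eq0 invr_eq0 negb_or xn0 dn0 => /(_ isT).
rewrite normrM normrN normfV (gtr0_norm dp).
have -> : - x / d * x + (- x / d) ^+ 2 * K = x ^+ 2 * (K - d) / d ^+ 2.
  by field.
have x2 : 0 < x ^+ 2 by rewrite lt_def sqrf_eq0 xn0 sqr_ge0.
have lt1 : `|x| / d < 2^-1.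
  rewrite ltr_pdivrMr // /d mulrA mulVf ?pnatr_eq0 // mul1r; have := normr_ge0 x; lra.
move=> /(_ lt1).
rewrite pmulr_lge0 ?invr_gt0 ?exprn_gt0 //.
rewrite pmulr_rge0 // subr_ge0 /d; have := normr_ge0 x; lra.
Qed.

Lemma offdiag_zero (a b c d : R) :
  (forall t : R, 0 <= 2 * t * a + t ^+ 2 * b - 2 * t * c + t ^+ 2 * d) ->
  0 <= b -> 0 <= d -> a = c.
Proof.
move=> H b0 d0.
have : 2 * (a - c) = 0.
  apply: (@eps_zero _ (b + d)); first lra.
  move=> t _ _; have := H t; congr (0 <= _); ring.
lra.
Qed.

Lemma diag_zero (a b c d : R) :
  (forall t s : R, t != 0 -> `|t| < 2^-1 -> s * (1 + t) = - t ->
     0 <= 2 * t * a + t ^+ 2 * b + 2 * s * c + s ^+ 2 * d) ->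
  0 <= b -> 0 <= d -> a = c.
Proof.
move=> H b0 d0.
have : 2 * (a - c) = 0.
  apply: (@eps_zero _ (b + 4 * d + 4 * `|c|)).
    have := normr_ge0 c; lra.
  move=> t tn0 tlt.
  have tb : - 2^-1 < t < 2^-1 by rewrite -ltr_norml.
  have t1 : 2^-1 < 1 + t by lra.
  have t1n0 : 1 + t != 0 by apply/eqP => E; lra.
  set s := - t / (1 + t).
  have hs : s * (1 + t) = - t by rewrite /s divfK.
  have := H t s tn0 tlt hs.
  set e := s + t.
  have he : e * (1 + t) = t ^+ 2 by rewrite /e mulrDl hs; ring.
  have e0 : 0 <= e.
    have : 0 <= e * (1 + t) by rewrite he sqr_ge0.
    by rewrite pmulr_lge0 //; lra.
  have e2 : e <= 2 * t ^+ 2.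
    have : e * (1 + t) <= e * 2 * (1 + t) * (1 + t) by nra.
    rewrite he => h.
    have : t ^+ 2 * 2 <= e * (1 + t) * 2 * 2 by nra.
    rewrite he; have := sqr_ge0 t; nra.
  have s2 : s ^+ 2 <= 4 * t ^+ 2.
    have hs2 : s ^+ 2 * (1 + t) ^+ 2 = t ^+ 2 by rewrite -exprMn hs sqrrN.
    have : s ^+ 2 * 4^-1 <= s ^+ 2 * (1 + t) ^+ 2.
      apply: ler_wpM2l; first exact: sqr_ge0.
      have -> : (4 : R)^-1 = 2^-1 ^+ 2 by rewrite expr2 -invfM; congr (_^-1); ring.
      rewrite ler_sqr ?nnegrE; lra.
    rewrite hs2; lra.
  have ce : 2 * e * c <= 4 * t ^+ 2 * `|c|.
    have : c <= `|c| := ler_norm c.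
    have := normr_ge0 c; nra.
  have sd : s ^+ 2 * d <= 4 * t ^+ 2 * d by nra.
  have es : s = e - t by rewrite /e; ring.
  rewrite es => h.
  nra.
lra.
Qed.


Lemma frob2_DZ {m n} (A B : 'M[R]_(m, n)) (t : R) :
  frob2 (A + t *: B) = frob2 A + 2 * t * frob_inner B A + t ^+ 2 * frob2 B.
Proof.
rewrite /frob2 !(frob_innerDl, frob_innerDr, frob_innerZl, frob_innerZr).
rewrite (frob_innerC A B); ring.
Qed.

Lemma tr_mul_delta {n} (M : 'M[R]_n) (p q : 'I_n) :
  \tr (M *m delta_mx p q) = M q p.
Proof.
rewrite /mxtrace (bigD1 q) //= big1 ?addr0.
  rewrite mxE (bigD1 p) //= big1 ?addr0; first by rewrite !mxE !eqxx mulr1.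
  by move=> l /negPf hl; rewrite mxE hl mulr0.
move=> k hk; rewrite mxE big1 // => l _.
by rewrite mxE (negPf hk) andbF mulr0.
Qed.

Lemma obj_dir {n1 n2 r} (X Xs : 'M[R]_(n1, r)) (Y Ys : 'M[R]_(n2, r))
  (E : 'M[R]_r) (t s : R) :
  (forall P : 'M[R]_r, P \in unitmx ->
     align_obj X Xs Y Ys 1%:M <= align_obj X Xs Y Ys P) ->
  (1%:M + t *: E) *m (1%:M + s *: E) = 1%:M ->
  0 <= 2 * t * frob_inner (X *m E) (X - Xs) + t ^+ 2 * frob2 (X *m E)
     + 2 * s * frob_inner (Y *m E^T) (Y - Ys) + s ^+ 2 * frob2 (Y *m E^T).
Proof.
move=> Hmin HPQ.
have [Pu Qu] := mulmx1_unit HPQ.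
have Hinv : invmx (1%:M + t *: E) = 1%:M + s *: E.
  have := congr1 (mulmx (invmx (1%:M + t *: E))) HPQ.
  by rewrite mulmxA mulVmx // mul1mx mulmx1.
have := Hmin _ Pu.
have T1 : forall A : 'M[R]_r, (1%:M + s *: A)^T = 1%:M + s *: A^T.
  by move=> A; apply/matrixP => i j; rewrite !mxE eq_sym.
have T0 : (1%:M : 'M[R]_r)^T = 1%:M.
  by apply/matrixP => i j; rewrite !mxE eq_sym.
rewrite /align_obj Hinv invmx1 T0 T1 !mulmx1.
rewrite !mulmxDr !mulmx1 -!scalemxAr.
rewrite [X + _ - _]addrAC [Y + _ - _]addrAC !frob2_DZ.
move=> h; rewrite -(lerD2l (frob2 (X - Xs) + frob2 (Y - Ys))) addr0.
by move: h; congr (_ <= _); ring.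
Qed.


Lemma first_order {n1 n2 r} (X Xs : 'M[R]_(n1, r)) (Y Ys : 'M[R]_(n2, r)) :
  (forall P : 'M[R]_r, P \in unitmx ->
     align_obj X Xs Y Ys 1%:M <= align_obj X Xs Y Ys P) ->
  X^T *m (X - Xs) = (Y - Ys)^T *m Y.
Proof.
move=> Hmin; apply/matrixP => i j.
set E : 'M[R]_r := delta_mx i j.
have ea : frob_inner (X *m E) (X - Xs) = (X^T *m (X - Xs)) i j.
  rewrite /frob_inner mulmxA tr_mul_delta !mxE; apply: eq_bigr => k _.
  by rewrite !mxE mulrC.
have ec : frob_inner (Y *m E^T) (Y - Ys) = ((Y - Ys)^T *m Y) i j.
  by rewrite /frob_inner /E trmx_delta mulmxA tr_mul_delta.
rewrite -ea -ec.
have [eij|nij] := eqVneq i j.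
  have EE : E *m E = E by rewrite /E -{1}eij mul_delta_mx eij.
  apply: (@diag_zero _ (frob2 (X *m E)) _ (frob2 (Y *m E^T)));
    last 2 first; [exact: frob2_ge0 | exact: frob2_ge0 |].
  move=> t s _ _ hs; apply: obj_dir => //.
  rewrite mulmxDl !mulmxDr !mul1mx mulmx1 -!scalemxAl -!scalemxAr EE scalerA.
  rewrite -addrA -scalerDl -scalerDl.
  have -> : s + (t + t * s) = 0 by move: hs; rewrite mulrDr mulr1 => hs; lra.
  by rewrite scale0r addr0.
have EE : E *m E = 0 by rewrite /E mul_delta_mx_0 // eq_sym.
apply: (@offdiag_zero _ (frob2 (X *m E)) _ (frob2 (Y *m E^T)));
  last 2 first; [exact: frob2_ge0 | exact: frob2_ge0 |].
move=> t; have := @obj_dir _ _ _ X Xs Y Ys E t (- t) Hmin.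
have HPQ : (1%:M + t *: E) *m (1%:M + - t *: E) = 1%:M.
  rewrite mulmxDl !mulmxDr !mul1mx mulmx1 -!scalemxAl -!scalemxAr EE !scaler0.
  by rewrite addr0 scaleNr addrNK.
move=> /(_ HPQ); congr (0 <= _); ring.
Qed.

End Frob.

Theorem lemma3 (R : rcfType) (n1 n2 r : nat)
  (Ms : 'M[R]_(n1, n2)) (U : 'M[R]_(n1, r)) (s : 'rV[R]_r) (V : 'M[R]_(n2, r))
  (X : 'M[R]_(n1, r)) (Y : 'M[R]_(n2, r)) :
  compact_svd Ms U s V ->
  let Xs := U *m sqrt_diag s in
  let Ys := V *m sqrt_diag s in
  (forall P : 'M[R]_r, P \in unitmx ->
     align_obj X Xs Y Ys 1%:M <= align_obj X Xs Y Ys P) ->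
  frob2 (Y *m (X - Xs)^T) - (frob2 (X - Xs)) ^+ 2 / 4
    <= frob_inner (X - Xs) ((X *m Y^T - Ms) *m Y)
  /\
  frob2 (X *m (Y - Ys)^T) - (frob2 (Y - Ys)) ^+ 2 / 4
    <= frob_inner (Y - Ys) ((X *m Y^T - Ms)^T *m X).
Proof.
case=> UU VV sp _ eMs Xs Ys Hmin.
have HK := @first_order R _ _ _ X Xs Y Ys Hmin.
have eM : Ms = Xs *m Ys^T.
  rewrite eMs /Xs /Ys /sqrt_diag trmx_mul tr_diag_mx !mulmxA.
  rewrite -[in RHS](mulmxA U) mulmx_diag; congr (U *m diag_mx _ *m _); apply/rowP => k; rewrite !mxE.
  by rewrite -expr2 sqr_sqrtr // ltW.
have sK m n (A B : 'M[R]_(m, n)) : A - (A - B) = B by rewrite opprB addrC subrK.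
split.
  have := @main_ineq' R _ _ _ _ _ _ _ HK; rewrite !sK -eM; exact.
have HK' : Y^T *m (Y - Ys) = (X - Xs)^T *m X.
  by have := congr1 trmx HK; rewrite !trmx_mul !trmxK => ->.
have := @main_ineq' R _ _ _ _ _ _ _ HK'; rewrite !sK.
have -> : Y *m X^T - Ys *m Xs^T = (X *m Y^T - Ms)^T.
  by rewrite eM linearB /= !trmx_mul !trmxK.
exact.
Qed.
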